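(* Let \(X\) be a nonempty set, let \((Q, \preccurlyeq_Q)\) be a poset with smallest element \(q_0\), and let \(d \colon X^2 \to Q\) be a \(Q\)-pseudoultrametric on \(X\). Then \(d^{-1}(q_0)=\{\langle x,y\rangle\in X^2: d(x,y)=q_0\}\) is an equivalence relation on \(X\) and \(d\) is \(q_0\)-coherent.
   Context: A mapping \(d\colon X^2\to Q\) is a \(Q\)-pseudoultrametric if \(d\) is symmetric, \(d(x,x)=q_0\) for all \(x\in X\), and for every triple \(\langle x_1,x_2,x_3\rangle\) of points of \(X\) there is a permutation \((i_1,i_2,i_3)\) of \((1,2,3)\) with \(d(x_{i_1},x_{i_3})\preccurlyeq_Q d(x_{i_1},x_{i_2})\) and \(d(x_{i_1},x_{i_2})=d(x_{i_2},x_{i_3})\). A mapping \(\Phi\) with domain \(X^2\) is strongly consistent with an equivalence relation \(R\) on \(X\) if \(\langle x_1,x_2\rangle\in R\) and \(\langle x_3,x_4\rangle\in R\) imply \(\Phi(x_1,x_3)=\Phi(x_2,x_4)\); for \(a_0\) in the range of \(\Phi\), \(\Phi\) is \(a_0\)-coherent if the fiber \(\Phi^{-1}(a_0)\) is an equivalence relation on \(X\) and \(\Phi\) is strongly consistent with it. *)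

(* Defs.v *)
From Stdlib Require Import RelationClasses.

Definition is_poset {Q : Type} (le : Q -> Q -> Prop) : Prop :=
  (forall a, le a a) /\
  (forall a b, le a b -> le b a -> a = b) /\
  (forall a b c, le a b -> le b c -> le a c).

Definition is_smallest {Q : Type} (le : Q -> Q -> Prop) (q0 : Q) : Prop :=
  forall q, le q0 q.

Definition Q_pseudoultrametric {X Q : Type} (le : Q -> Q -> Prop) (q0 : Q)
    (d : X -> X -> Q) : Prop :=
  (forall x y, d x y = d y x) /\
  (forall x, d x x = q0) /\
  (forall x1 x2 x3 : X,
     exists y1 y2 y3 : X,
       (* (y1,y2,y3) is a permutation of (x1,x2,x3) *)
       ((y1 = x1 /\ y2 = x2 /\ y3 = x3) \/ (y1 = x1 /\ y2 = x3 /\ y3 = x2) \/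
        (y1 = x2 /\ y2 = x1 /\ y3 = x3) \/ (y1 = x2 /\ y2 = x3 /\ y3 = x1) \/
        (y1 = x3 /\ y2 = x1 /\ y3 = x2) \/ (y1 = x3 /\ y2 = x2 /\ y3 = x1)) /\
       le (d y1 y3) (d y1 y2) /\ d y1 y2 = d y2 y3).

Definition is_equivalence {X : Type} (R : X -> X -> Prop) : Prop :=
  (forall x, R x x) /\ (forall x y, R x y -> R y x) /\
  (forall x y z, R x y -> R y z -> R x z).

Definition strongly_consistent {X A : Type} (Phi : X -> X -> A)
    (R : X -> X -> Prop) : Prop :=
  forall x1 x2 x3 x4, R x1 x2 -> R x3 x4 -> Phi x1 x3 = Phi x2 x4.

Definition fiber {X A : Type} (Phi : X -> X -> A) (a0 : A) : X -> X -> Prop :=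
  fun x y => Phi x y = a0.

Definition coherent {X A : Type} (Phi : X -> X -> A) (a0 : A) : Prop :=
  (exists x y, Phi x y = a0) /\
  is_equivalence (fiber Phi a0) /\ strongly_consistent Phi (fiber Phi a0).

(* Main.v *)
Require Import Defs.

Ltac fin q0 anti sm H1 H2 :=
  first [ congruence
        | match type of H1 with ?L ?A ?B =>
            let HB := fresh in
            assert (HB : B = q0) by congruence;
            assert (A = q0) by (apply anti; [ rewrite <- HB; exact H1 | exact (sm _) ]);
            congruence end ].

Lemma key (X Q : Type) (le : Q -> Q -> Prop) (q0 : Q) (d : X -> X -> Q) :
  is_poset le -> is_smallest le q0 -> Q_pseudoultrametric le q0 d ->
  forall x y z, d x y = q0 -> (d x z = q0 -> d y z = q0) /\ (d x z = d y z).
Proof.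
  intros [_ [anti _]] sm [sym [_ tri]] x y z Hxy.
  assert (sxy := sym x y). assert (sxz := sym x z). assert (syz := sym y z).
  destruct (tri x y z) as [y1 [y2 [y3 [P [H1 H2]]]]].
  destruct P as [[-> [-> ->]]|[[-> [-> ->]]|[[-> [-> ->]]|[[-> [-> ->]]|[[-> [-> ->]]|[-> [-> ->]]]]]]];
  split; try intro.
all: try (fin q0 anti sm H1 H2).

Qed.

Theorem proposition3p16 (X Q : Type) (le : Q -> Q -> Prop) (q0 : Q)
  (d : X -> X -> Q) :
  inhabited X ->
  is_poset le ->
  is_smallest le q0 ->
  Q_pseudoultrametric le q0 d ->
  is_equivalence (fiber d q0) /\ coherent d q0.
Proof.
  intros [x0] P S U.
  pose proof (key _ _ _ _ _ P S U) as K.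
  destruct U as [sym [refl _]].
  assert (E : is_equivalence (fiber d q0)).
  { unfold fiber; split; [exact refl|split].
    - intros x y H. rewrite sym; exact H.
    - intros x y z H1 H2. apply (proj1 (K y x z ltac:(rewrite sym; exact H1))); exact H2. }
  split; [exact E|]. split; [exists x0, x0; apply refl|]. split; [exact E|].
  intros x1 x2 x3 x4 H12 H34. unfold fiber in *.
  rewrite (proj2 (K x1 x2 x3 H12)), (sym x2 x3), (proj2 (K x3 x4 x2 H34)), sym. reflexivity.
Qed.
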